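(* Let $K$ be a polyhedral cone with nonempty interior in a finite dimensional real Banach space $X$, and let $\mathrm{id}$ be the identity on $X$. Let $f:\operatorname{int}K\to\operatorname{int}K$ be order-preserving and homogeneous, and let $g=f+\mathrm{id}$. If $f$ has an eigenvector in $\operatorname{int}K$, then for every $x\in\operatorname{int}K$, $g^k(x)/\|g^k(x)\|$ converges as $k\to\infty$ to an eigenvector of $f$.
   Context: A closed cone is a closed convex set $K$ with $tK\subseteq K$ for $t>0$ and $K\cap(-K)=\{0\}$; it is polyhedral if it is the convex hull of finitely many rays from the origin. The order is $x\le_K y$ iff $y-x\in K$. Order-preserving: $x\le_K y\Rightarrow f(x)\le_K f(y)$; homogeneous: $f(tx)=tf(x)$ for $t>0$. An eigenvector of $f$ is $x$ with $f(x)=\mu x$ for some $\mu$. *)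

(* Defs.v *)
From HB Require Import structures.
From mathcomp Require Import all_boot all_order all_algebra.
From mathcomp Require Import all_classical all_reals all_analysis.
Set Implicit Arguments. Unset Strict Implicit. Unset Printing Implicit Defensive.
Import Order.TTheory GRing.Theory Num.Theory.
Import numFieldTopology.Exports numFieldNormedType.Exports.
Local Open Scope ring_scope.
Local Open Scope classical_set_scope.

Definition is_norm (R : realType) (n : nat) (N : 'rV[R]_n -> R) : Prop :=
  [/\ forall x, N x = 0 -> x = 0,
      forall x y, N (x + y) <= N x + N y &
      forall (a : R) x, N (a *: x) = `|a| * N x].

Definition closed_cone (R : realType) (n : nat) (K : set 'rV[R]_n) : Prop :=
  [/\ closed K,
      forall x y (t : R), K x -> K y -> 0 <= t -> t <= 1 -> K (t *: x + (1 - t) *: y),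
      forall (t : R) x, 0 < t -> K x -> K (t *: x) &
      forall x, K x -> K (- x) -> x = 0].

(* Polyhedral: the convex hull of finitely many rays from the origin,
   i.e. the set of nonnegative combinations of finitely many vectors. *)
Definition polyhedral (R : realType) (n : nat) (K : set 'rV[R]_n) : Prop :=
  exists (m : nat) (v : 'I_m -> 'rV[R]_n),
    K = [set x | exists t : 'I_m -> R,
                   (forall i, 0 <= t i) /\ x = \sum_(i < m) t i *: v i].

Definition cone_le (R : realType) (n : nat) (K : set 'rV[R]_n) (x y : 'rV[R]_n) : Prop :=
  K (y - x).

Definition order_preserving_on (R : realType) (n : nat) (K D : set 'rV[R]_n)
  (f : 'rV[R]_n -> 'rV[R]_n) : Prop :=
  forall x y, D x -> D y -> cone_le K x y -> cone_le K (f x) (f y).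

Definition homogeneous_on (R : realType) (n : nat) (D : set 'rV[R]_n)
  (f : 'rV[R]_n -> 'rV[R]_n) : Prop :=
  forall (t : R) x, 0 < t -> D x -> f (t *: x) = t *: f x.

Definition eigenvector (R : realType) (n : nat) (f : 'rV[R]_n -> 'rV[R]_n)
  (x : 'rV[R]_n) : Prop :=
  exists mu : R, f x = mu *: x.

(* Main.v *)
Require Import Defs.
From HB Require Import structures.
From mathcomp Require Import all_boot all_order all_algebra.
From mathcomp Require Import all_classical all_reals all_analysis.
Import Order.TTheory GRing.Theory Num.Theory.
Import numFieldTopology.Exports numFieldNormedType.Exports.
Local Open Scope ring_scope.
Local Open Scope classical_set_scope.

From mathcomp Require Import ring lra.

Ltac vec_id := apply/rowP => ?; rewrite !mxE; ring.

Lemma exists_nat_gt {R : realType} (x : R) : exists N : nat, x < N%:R.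
Proof. by exists (Num.trunc x).+1; exact: truncnS_gt. Qed.

Section S.
Context (R : realType) (n : nat).
Implicit Types (x y : 'rV[R]_n).

Lemma seq_cluster (M : R) (s : nat -> 'rV[R]_n) : (forall k, `|s k| <= M) ->
  exists z : 'rV[R]_n, forall e, 0 < e -> forall N, exists2 k, (N <= k)%N & `|z - s k| < e.
Proof.
move=> sM.
have M0 : 0 <= M by apply: le_trans (sM 0%N).
pose D := closed_ball (0 : 'rV[R]_n) (M + 1).
have cD : compact D.
  apply: bounded_closed_compact; last exact: closed_ball_closed.
  rewrite /= /bounded_near; near=> M' => x.
  rewrite /D closed_ballE ?ltr_wpDl // /closed_ball_ /= sub0r normrN => Hx.
  apply: le_trans Hx _.
  near: M'; apply: nbhs_pinfty_ge; by rewrite num_real.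
have FD : (s @ \oo) D.
  exists 0%N => // k _; rewrite /D closed_ballE ?ltr_wpDl // /closed_ball_ /= sub0r normrN.
  by apply: le_trans (sM k) _; rewrite lerDl.
have [z [_ Hz]] := cD _ _ FD.
exists z => e e0 N.
have := Hz (s @` [set k | (N <= k)%N]) (ball z e).
case.
- by exists N => // k /= Nk; exists k.
- exact: nbhsx_ballx.
move=> w [[k /= Nk <-]]; rewrite -ball_normE /ball_ /= => H.
by exists k.
Unshelve. all: by end_near.
Qed.

End S.

Section NormLemmas.
Context (R : realType) (n : nat) (N : 'rV[R]_n -> R) (HN : is_norm N).

Lemma N0 : N 0 = 0.
Proof. have [_ _ HZ] := HN; by rewrite -(scale0r 0) HZ normr0 mul0r. Qed.

Lemma NN h : N (- h) = N h.
Proof. have [_ _ HZ] := HN; by rewrite -scaleN1r HZ normrN normr1 mul1r. Qed.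

Lemma Nge0 h : 0 <= N h.
Proof.
have [_ HD _] := HN; have := HD h (- h); rewrite subrr N0 NN => H; lra.
Qed.

Lemma entry_le (h : 'rV[R]_n) j : `|h 0 j| <= `|h|.
Proof.
rewrite [leRHS]/Num.Def.normr /= mx_normrE; apply/bigmax_geP; right => /=.
by exists (0, j).
Qed.

Lemma Nsum (I : Type) (r : seq I) (F : I -> 'rV[R]_n) :
  N (\sum_(i <- r) F i) <= \sum_(i <- r) N (F i).
Proof.
have [_ HD _] := HN.
elim: r => [|i r IH]; first by rewrite !big_nil N0.
rewrite !big_cons; apply: le_trans (HD _ _) _; exact: lerD.
Qed.

Lemma N_bound : exists2 C : R, 0 <= C & forall h, N h <= C * `|h|.
Proof.
have [_ _ HZ] := HN.
exists (\sum_(j < n) N (delta_mx 0 j)); first by apply: sumr_ge0 => j _; exact: Nge0.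
move=> h; rewrite {1}(row_sum_delta h).
apply: le_trans (Nsum _ _ _) _.
rewrite mulr_suml; apply: ler_sum => j _; rewrite HZ [leRHS]mulrC.
apply: ler_wpM2r; [exact: Nge0 | exact: entry_le].
Qed.

Lemma N_lip : exists2 C : R, 0 <= C & forall h k, `|N h - N k| <= C * `|h - k|.
Proof.
have [C C0 HC] := N_bound; exists C => // h k.
have [_ HD _] := HN.
have h1 : N k <= N (k - h) + N h by have := HD (k - h) h; rewrite subrK.
have h2 : N h <= N (h - k) + N k by have := HD (h - k) k; rewrite subrK.
have h3 : N (k - h) = N (h - k) by rewrite -opprB NN.
have h4 := HC (h - k).
move: h1 h2 h4; rewrite h3; set A := N (h - k); set B := C * _ => h1 h2 h4.
rewrite ler_norml; apply/andP; split; lra.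
Qed.

End NormLemmas.

Section Cone.
Context (R : realType) (n : nat) (K : set 'rV[R]_n).
Context (Kcl : closed K) (K0 : K 0)
  (KD0 : forall x y, K x -> K y -> K (x + y))
  (KZ0 : forall (t : R) x, 0 <= t -> K x -> K (t *: x))
  (Kpt0 : forall x, K x -> K (- x) -> x = 0).
Implicit Types (x y z a b c p q w h : 'rV[R]_n).

Local Notation le x y := (K (y - x)).

Lemma KD {x y} : K x -> K y -> K (x + y). Proof. exact: KD0. Qed.
Lemma KZ {t : R} {x} : 0 <= t -> K x -> K (t *: x). Proof. exact: KZ0. Qed.
Lemma Kpt {x} : K x -> K (- x) -> x = 0. Proof. exact: Kpt0. Qed.

Lemma le_refl x : le x x.
Proof. by rewrite subrr. Qed.

Lemma le_trans' {x y z} : le x y -> le y z -> le x z.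
Proof. by move=> H1 H2; have := KD H2 H1; rewrite addrA subrK. Qed.

Lemma le_add {a b c d} : le a b -> le c d -> le (a + c) (b + d).
Proof. by move=> H1 H2; rewrite opprD addrACA; apply: KD. Qed.

Lemma le_scale {t : R} {a b} : 0 <= t -> le a b -> le (t *: a) (t *: b).
Proof. by move=> t0 H; rewrite -scalerBr; apply: KZ. Qed.

Lemma le_scalar {s t : R} {w} : s <= t -> K w -> le (s *: w) (t *: w).
Proof. by move=> st Kw; rewrite -scalerBl; apply: KZ; rewrite // subr_ge0. Qed.

Lemma le_antisym {a b} : le a b -> le b a -> a = b.
Proof.
move=> H1 H2; have := Kpt H1; rewrite opprB => /(_ H2) /eqP.
by rewrite subr_eq0 => /eqP.
Qed.

Lemma le_divl (s : R) p q : 0 < s -> le (s *: p) q -> le p (s^-1 *: q).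
Proof.
move=> s0 H; have i : 0 <= s^-1 by rewrite invr_ge0 ltW.
have := le_scale i H.
by rewrite scalerA mulVf ?gt_eqF // scale1r.
Qed.

Lemma le_divr (s : R) p q : 0 < s -> le p (s *: q) -> le (s^-1 *: p) q.
Proof.
move=> s0 H; have i : 0 <= s^-1 by rewrite invr_ge0 ltW.
have := le_scale i H.
by rewrite scalerA mulVf ?gt_eqF // scale1r.
Qed.

Lemma K_le0 x : K x = le 0 x.
Proof. by rewrite subr0. Qed.

Lemma int_ballK p : interior K p -> exists2 r : R, 0 < r & forall h, `|h| <= r -> K (p + h).
Proof.
move=> /nbhs_ballP [e e0 He]; exists (e / 2); first by rewrite divr_gt0.
move=> h hr; apply: He; rewrite -ball_normE /ball_ /=.
have -> : p - (p + h) = - h by rewrite opprD addrA subrr add0r.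
rewrite normrN; apply: le_lt_trans hr _.
by rewrite ltr_pdivrMr // ltr_pMr // ltr1n.
Qed.

Lemma int_order p : interior K p ->
  exists2 r : R, 0 < r & forall h (e : R), 0 < e -> `|h| <= e * r -> K (e *: p + h).
Proof.
move=> /int_ballK [r r0 Hr]; exists r => // h e e0 he.
have : K (p + e^-1 *: h).
  apply: Hr; rewrite normrZ ger0_norm ?invr_ge0 ?(ltW e0) //.
  by rewrite ler_pdivrMl.
by move=> /(KZ (ltW e0)); rewrite scalerDr scalerA mulfV ?gt_eqF // scale1r.
Qed.

Lemma int_add {p q} : interior K p -> K q -> interior K (p + q).
Proof.
move=> /nbhs_ballP [e e0 He] Kq; apply/nbhs_ballP; exists e => // w.
rewrite -ball_normE /ball_ /= => Hw.
have : K (w - q).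
  apply: He; rewrite -ball_normE /ball_ /=.
  by rewrite opprB addrA.
by move=> /KD /(_ Kq); rewrite subrK.
Qed.

Lemma int_scale {t : R} {p} : 0 < t -> interior K p -> interior K (t *: p).
Proof.
move=> t0 /nbhs_ballP [e e0 He]; apply/nbhs_ballP; exists (t * e).
  by apply: mulr_gt0.
move=> w; rewrite -ball_normE /ball_ /= => Hw.
have : K (t^-1 *: w).
  apply: He; rewrite -ball_normE /ball_ /=.
  have -> : p - t^-1 *: w = t^-1 *: (t *: p - w).
    by rewrite scalerBr scalerA mulVf ?gt_eqF // scale1r.
  rewrite normrZ ger0_norm ?invr_ge0 ?(ltW t0) // ltr_pdivrMl //.
by move=> /(KZ (ltW t0)); rewrite scalerA mulfV ?gt_eqF // scale1r.
Qed.

Lemma int_K {p} : interior K p -> K p.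
Proof. exact: nbhs_singleton. Qed.

Lemma int_lower x u : interior K x -> exists2 a : R, 0 < a & le (a *: u) x.
Proof.
move=> /int_ballK [r r0 Hr]; exists (r / (`|u| + 1)).
  by rewrite divr_gt0 // ltr_wpDl.
apply: Hr; rewrite normrN normrZ ger0_norm; last by rewrite divr_ge0 ?ltW // ltr_wpDl.
rewrite mulrAC ler_pdivrMr ?ltr_wpDl // ler_pM2l // lerDl //.
Qed.

Lemma int_upper x u : interior K u -> exists2 b : R, 0 < b & le x (b *: u).
Proof.
move=> /int_order [r r0 Hr]; exists (`|x| / r + 1).
  by rewrite ltr_wpDl // divr_ge0 // ltW.
apply: Hr; first by rewrite ltr_wpDl // divr_ge0 // ltW.
rewrite normrN mulrDl mul1r mulfVK ?gt_eqF // lerDl ltW //.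
Qed.

Lemma closed_approx q : (forall e : R, 0 < e -> exists w, K w /\ `|q - w| < e) -> K q.
Proof.
move=> H; apply: Kcl => B /nbhs_ballP [e e0 He].
have [w [Kw qw]] := H e e0; exists w; split => //; apply: He.
by rewrite -ball_normE.
Qed.

Lemma close_lim q w : (forall d : R, 0 < d -> K (q + d *: w)) -> K q.
Proof.
move=> H; apply: closed_approx => e e0.
have Hw : 0 < `|w| + 1 by rewrite ltr_wpDl.
exists (q + (e / 2 / (`|w| + 1)) *: w); split.
  by apply: H; rewrite !divr_gt0.
rewrite opprD addrA subrr sub0r normrN normrZ ger0_norm; last by rewrite !divr_ge0 // ?ltW.
rewrite mulrAC ltr_pdivrMr // (@le_lt_trans _ _ (e / 2 * (`|w| + 1))) //.
  by rewrite ler_pM2l ?divr_gt0 // lerDl.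
by rewrite ltr_pM2r // ltr_pdivrMr // ltr_pMr // ltr1n.
Qed.

Lemma normal_K : exists2 C : R, 0 < C & forall h c, K h -> le h c -> `|h| <= C * `|c|.
Proof.
apply: contrapT => H.
have /choice [hc Hhc] : forall k : nat, exists hc : 'rV[R]_n * 'rV[R]_n,
   [/\ K hc.1, le hc.1 hc.2 & k.+1%:R * `|hc.2| < `|hc.1|].
  move=> k; apply: contrapT => Hk; apply: H; exists k.+1%:R => // h c Kh hc.
  rewrite leNgt; apply/negP => lt; apply: Hk; by exists (h, c).
have hpos k : 0 < `|(hc k).1|.
  have [_ _ H1] := Hhc k; apply: le_lt_trans H1.
  by rewrite mulr_ge0.
pose s k := `|(hc k).1|^-1 *: (hc k).1.
have s1 k : `|s k| = 1.
  by rewrite /s normrZ ger0_norm ?invr_ge0 // mulVf // gt_eqF.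
have [z Hz] := @seq_cluster R n 1 s (fun k => ltac:(by rewrite s1)).
have Kz : K z.
  apply: closed_approx => e e0.
  have [k _ hk] := Hz e e0 0%N; exists (s k); split => //.
  have [H1 _ _] := Hhc k.
  by apply: KZ => //; rewrite invr_ge0.
have Kmz : K (- z).
  apply: closed_approx => e e0.
  have [N HN] := exists_nat_gt (2 / e).
  have e20 : 0 < e / 2 by rewrite divr_gt0.
  have [k Nk hk] := Hz (e/2) e20 N.
  have [H1 H2 H3] := Hhc k.
  exists (`|(hc k).1|^-1 *: ((hc k).2 - (hc k).1)); split.
    by apply: KZ => //; rewrite invr_ge0.
  have -> : - z - `|(hc k).1|^-1 *: ((hc k).2 - (hc k).1)
     = - (z - s k) - `|(hc k).1|^-1 *: (hc k).2 by rewrite /s; vec_id.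
  apply: le_lt_trans (ler_normD _ _) _.
  rewrite !normrN normrZ ger0_norm ?invr_ge0 //.
  have -> : e = e / 2 + e / 2 by rewrite -splitr.
  apply: ltrD => //.
  rewrite mulrC ltr_pdivrMr //.
  have Hk : 2 / e < k.+1%:R.
    by apply: lt_le_trans HN _; rewrite ler_nat; exact: leqW.
  have Hk2 : 2 < e * k.+1%:R.
    have E : e * (2 / e) = 2 by field; rewrite gt_eqF.
    by rewrite -{1}E ltr_pM2l.
  have Hc : 0 <= `|(hc k).2| by [].
  move: H3 Hk2 Hc e0; set m := k.+1%:R; set a := `|(hc k).2|; set b := `|(hc k).1|.
  move=> H3 Hk2 Hc e0; nra.
have z0 := Kpt Kz Kmz.
have h20 : (0:R) < 1/2 by rewrite divr_gt0.
have [k _ hk] := Hz (1/2) h20 0%N.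
move: hk; rewrite z0 sub0r normrN s1.
lra.
Qed.
Lemma chain (c : R) (e : 'rV[R]_n) (w z : nat -> 'rV[R]_n) :
  0 <= c -> c <= 1 ->
  (forall j, K (w j)) -> (forall j, le (c *: w j) (w j.+1)) ->
  (forall j, le (z j - z j.+1 + e) (w j)) ->
  forall j, le (c ^+ j *: (z 0%N - z j.+1 + j.+1%:R *: e)) (j.+1%:R *: w j).
Proof.
move=> c0 c1 Kw Hcw Hz; elim=> [|j IH].
  by rewrite expr0 !scale1r; exact: (Hz 0%N).
have A := le_scale c0 IH.
have B := le_scale (ler0n R j.+1) (Hcw j).
have cj0 : 0 <= c ^+ j.+1 by rewrite exprn_ge0.
have C := le_scale cj0 (Hz j.+1).
have D : le (c ^+ j.+1 *: w j.+1) (w j.+1).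
  have := le_scalar (exprn_ile1 _ c0 c1) (Kw j.+1 ); by rewrite scale1r.
have E1 : c ^+ j.+1 *: (z 0%N - z j.+2 + j.+2%:R *: e) =
   c *: (c ^+ j *: (z 0%N - z j.+1 + j.+1%:R *: e)) + c ^+ j.+1 *: (z j.+1 - z j.+2 + e).
  by rewrite exprS; vec_id.
have E2 : j.+2%:R *: w j.+1 = j.+1%:R *: w j.+1 + w j.+1 by vec_id.
have E3 : c *: (j.+1%:R *: w j) = j.+1%:R *: (c *: w j) by vec_id.
rewrite E1 E2; apply: le_add; last exact: le_trans' C D.
by apply: le_trans' A _; rewrite E3.
Qed.

Section Dyn.
Context (f : 'rV[R]_n -> 'rV[R]_n) (lam : R) (u : 'rV[R]_n).
Context (fint : forall x, interior K x -> interior K (f x))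
  (fmono : forall x y, interior K x -> interior K y -> le x y -> le (f x) (f y))
  (fhom : forall (t : R) x, 0 < t -> interior K x -> f (t *: x) = t *: f x)
  (uint : interior K u) (fu : f u = lam *: u) (lam0 : 0 < lam).

Definition T y := (1 + lam)^-1 *: (f y + y).
Local Notation c := ((1 + lam)^-1).

Lemma lam1 : 0 < 1 + lam. Proof. exact: addr_gt0. Qed.
Lemma c0 : 0 < c. Proof. by rewrite invr_gt0 lam1. Qed.
Lemma c1 : c <= 1.
Proof. by rewrite invr_le1 ?unitfE ?gt_eqF ?lam1 // lerDl ltW. Qed.

Lemma T_int y : interior K y -> interior K (T y).
Proof.
move=> yi; rewrite /T. apply: int_scale.   exact: c0.
apply: int_add; [exact: fint | exact: int_K].
Qed.

Lemma T_mono a b : interior K a -> interior K b -> le a b -> le (T a) (T b).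
Proof.
move=> ai bi ab.
have -> : T b - T a = c *: ((f b - f a) + (b - a)) by rewrite /T; vec_id.
by apply: KZ (ltW c0) _; apply: KD => //; apply: fmono.
Qed.

Lemma T_hom (t : R) a : 0 < t -> interior K a -> T (t *: a) = t *: T a.
Proof. by move=> t0 ai; rewrite /T fhom //; vec_id. Qed.

Lemma T_gap a b : interior K a -> interior K b -> le b a -> le (c *: (a - b)) (T a - T b).
Proof.
move=> ai bi ba.
have -> : T a - T b - c *: (a - b) = c *: (f a - f b) by rewrite /T; vec_id.
by apply: KZ (ltW c0) _; apply: fmono.
Qed.

Lemma T_u : T u = u.
Proof.
rewrite /T fu; apply/rowP => i; rewrite !mxE; field.
by rewrite gt_eqF // lam1.
Qed.

Section Seq.
Context (x : 'rV[R]_n) (xint : interior K x) (a b : R) (a0 : 0 < a) (b0 : 0 < b)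
  (xa : le (a *: u) x) (xb : le x (b *: u)).

Definition y k := iter k T x.
Lemma yS k : y k.+1 = T (y k). Proof. by []. Qed.
Lemma y_int k : interior K (y k).
Proof. by elim: k => [|k IH] //; rewrite yS; exact: T_int. Qed.
Lemma y_K k : K (y k). Proof. exact: int_K (y_int k). Qed.

Lemma y_bounds k : le (a *: u) (y k) /\ le (y k) (b *: u).
Proof.
elim: k => [|k [IH1 IH2]] //; rewrite yS; split.
- have E : T (a *: u) = a *: u by rewrite T_hom // T_u.
  rewrite -E; apply: T_mono => //; [exact: int_scale a0 uint | exact: y_int].
- have E : T (b *: u) = b *: u by rewrite T_hom // T_u.
  rewrite -E; apply: T_mono => //; [exact: y_int | exact: int_scale b0 uint].
Qed.

Lemma prop_up (be : R) k : 0 < be -> le (y k.+1) (be *: y k) ->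
  forall j, le (y (j + k).+1) (be *: y (j + k)).
Proof.
move=> be0 H; elim=> [|j IH] //.
rewrite addSn.
have := @T_mono _ _ (y_int (j + k).+1) (int_scale be0 (y_int (j + k))) IH.
by rewrite T_hom //; exact: y_int.
Qed.

Lemma prop_lo (al : R) k : 0 < al -> le (al *: y k) (y k.+1) ->
  forall j, le (al *: y (j + k)) (y (j + k).+1).
Proof.
move=> al0 H; elim=> [|j IH] //.
rewrite addSn.
have := @T_mono _ _ (int_scale al0 (y_int (j + k))) (y_int (j + k).+1) IH.
by rewrite T_hom //; exact: y_int.
Qed.

Lemma dec_up (eta be : R) k (q : nat) : 0 < eta -> 1 + eta <= be ->
  b + 1 <= q.+1%:R * eta * a -> le (y k.+1) (be *: y k) ->
  le (y (q + k).+1) ((be - c ^+ q / (q.+1%:R * b)) *: y (q + k)).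
Proof.
move=> eta0 etabe hq H.
have be0 : 0 < be by lra.
have P := prop_up _ _ be0 H.
pose w j := be *: y (j + k) - y (j + k).+1.
pose z j := y (j + k).
have Kw j : K (w j) := P j.
have Hcw j : le (c *: w j) (w j.+1).
  have := T_gap _ _ (int_scale be0 (y_int (j + k))) (y_int (j + k).+1) (P j).
  rewrite (T_hom _ _ be0 (y_int (j + k))).
  by move=> H'; exact: H'.
have Hz j : le (z j - z j.+1 + (eta * a) *: u) (w j).
  rewrite /z /w addSn.
  have -> : be *: y (j + k) - y (j + k).+1 - (y (j + k) - y (j + k).+1 + (eta * a) *: u)
    = (be - 1 - eta) *: y (j + k) + eta *: (y (j + k) - a *: u) by vec_id.
  apply: KD; apply: KZ; [lra | exact: y_K | exact: ltW | exact: (y_bounds _).1].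
have := chain _ _ _ _ (ltW c0) c1 Kw Hcw Hz q.
rewrite /z /w add0n => Hch.
have Hu : le (c ^+ q *: u) (c ^+ q *: (y k - y (q + k).+1 + q.+1%:R *: ((eta * a) *: u))).
  apply: le_scale; first exact: exprn_ge0 (ltW c0).
  have -> : y k - y (q + k).+1 + q.+1%:R *: ((eta * a) *: u) - u
     = y k + (b *: u - y (q + k).+1) + (q.+1%:R * eta * a - b - 1) *: u by vec_id.
  apply: KD; first apply: KD; [exact: y_K | exact: (y_bounds _).2 | ].
  apply: KZ; [lra | exact: int_K uint].
have H2 := le_trans' Hu Hch.
have qn0 : (q.+1%:R : R) != 0 by rewrite pnatr_eq0.
have H3 : le ((q.+1%:R^-1 * c ^+ q) *: u) (w q).
  have q1 : (0 : R) <= q.+1%:R^-1 by rewrite invr_ge0.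
  have := le_scale q1 H2.
  by rewrite !scalerA mulVf // scale1r.
have H4 : le ((c ^+ q / (q.+1%:R * b)) *: y (q + k)) ((q.+1%:R^-1 * c ^+ q) *: u).
  have -> : (q.+1%:R^-1 * c ^+ q) *: u = (c ^+ q / (q.+1%:R * b)) *: (b *: u).
    rewrite scalerA; congr (_ *: _); field.
    by rewrite gt_eqF //= -natr1 addrC.
  apply: le_scale; last exact: (y_bounds _).2.
  by rewrite divr_ge0 ?exprn_ge0 ?(ltW c0) // mulr_ge0 // ltW.
have H5 := le_trans' H4 H3.
have -> : (be - c ^+ q / (q.+1%:R * b)) *: y (q + k) - y (q + k).+1
   = w q - (c ^+ q / (q.+1%:R * b)) *: y (q + k) by rewrite /w; vec_id.
exact: H5.
Qed.

Lemma dec_lo (eta al : R) k (q : nat) : 0 < eta -> 0 < al -> al <= 1 - eta ->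
  b + 1 <= q.+1%:R * eta * a -> le (al *: y k) (y k.+1) ->
  le ((al + c ^+ q / (q.+1%:R * b)) *: y (q + k)) (y (q + k).+1).
Proof.
move=> eta0 al0 aleta hq H.
have P := prop_lo _ _ al0 H.
pose w j := y (j + k).+1 - al *: y (j + k).
pose z j := - y (j + k).
have Kw j : K (w j) := P j.
have Hcw j : le (c *: w j) (w j.+1).
  have := T_gap _ _ (y_int (j + k).+1) (int_scale al0 (y_int (j + k))) (P j).
  rewrite (T_hom _ _ al0 (y_int (j + k))).
  by move=> H'; exact: H'.
have Hz j : le (z j - z j.+1 + (eta * a) *: u) (w j).
  rewrite /z /w addSn.
  have -> : y (j + k).+1 - al *: y (j + k) - (- y (j + k) - - y (j + k).+1 + (eta * a) *: u)
    = (1 - al - eta) *: y (j + k) + eta *: (y (j + k) - a *: u) by vec_id.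
  apply: KD; apply: KZ; [lra | exact: y_K | exact: ltW | exact: (y_bounds _).1].
have := chain _ _ _ _ (ltW c0) c1 Kw Hcw Hz q.
rewrite /z /w add0n => Hch.
have Hu : le (c ^+ q *: u) (c ^+ q *: (- y k - - y (q + k).+1 + q.+1%:R *: ((eta * a) *: u))).
  apply: le_scale; first exact: exprn_ge0 (ltW c0).
  have -> : - y k - - y (q + k).+1 + q.+1%:R *: ((eta * a) *: u) - u
     = (b *: u - y k) + y (q + k).+1 + (q.+1%:R * eta * a - b - 1) *: u by vec_id.
  apply: KD; first apply: KD; [exact: (y_bounds _).2 | exact: y_K | ].
  apply: KZ; [lra | exact: int_K uint].
have H2 := le_trans' Hu Hch.
have qn0 : (q.+1%:R : R) != 0 by rewrite pnatr_eq0.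
have H3 : le ((q.+1%:R^-1 * c ^+ q) *: u) (w q).
  have q1 : (0 : R) <= q.+1%:R^-1 by rewrite invr_ge0.
  have := le_scale q1 H2.
  by rewrite !scalerA mulVf // scale1r.
have H4 : le ((c ^+ q / (q.+1%:R * b)) *: y (q + k)) ((q.+1%:R^-1 * c ^+ q) *: u).
  have -> : (q.+1%:R^-1 * c ^+ q) *: u = (c ^+ q / (q.+1%:R * b)) *: (b *: u).
    rewrite scalerA; congr (_ *: _); field.
    by rewrite gt_eqF //= -natr1 addrC.
  apply: le_scale; last exact: (y_bounds _).2.
  by rewrite divr_ge0 ?exprn_ge0 ?(ltW c0) // mulr_ge0 // ltW.
have H5 := le_trans' H4 H3.
have -> : y (q + k).+1 - (al + c ^+ q / (q.+1%:R * b)) *: y (q + k)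
   = w q - (c ^+ q / (q.+1%:R * b)) *: y (q + k) by rewrite /w; vec_id.
exact: H5.
Qed.

Lemma q_exists {eta : R} : 0 < eta -> exists q : nat, b + 1 <= q.+1%:R * eta * a.
Proof.
move=> eta0; have [N HN] := exists_nat_gt ((b + 1) / (eta * a)).
exists N; have ea : 0 < eta * a by rewrite mulr_gt0.
rewrite -mulrA -ler_pdivrMr //; apply: ltW; apply: lt_le_trans HN _.
by rewrite ler_nat.
Qed.

Lemma delta_pos (q : nat) : 0 < c ^+ q / (q.+1%:R * b).
Proof. by rewrite divr_gt0 ?exprn_gt0 ?c0 // mulr_gt0. Qed.

Lemma eventually_up (eta : R) : 0 < eta -> exists k, le (y k.+1) ((1 + eta) *: y k).
Proof.
move=> eta0; have [q Hq] := q_exists eta0.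
set d := c ^+ q / (q.+1%:R * b).
have d0 : 0 < d := delta_pos q.
pose be0 := b / a.
have H0 : le (y 1%N) (be0 *: y 0%N).
  apply: le_trans' (y_bounds 1%N).2 _.
  have -> : b *: u = be0 *: (a *: u) by rewrite scalerA /be0 mulfVK // gt_eqF.
  apply: le_scale => //; first by rewrite divr_ge0 // ltW.
have claim : forall m : nat, (exists k, le (y k.+1) ((1 + eta) *: y k)) \/
    exists k be, [/\ 1 + eta <= be, be <= be0 - m%:R * d & le (y k.+1) (be *: y k)].
  elim=> [|m [IH|[k [be [H1 H2 H3]]]]].
  - have [hb|hb] := leP be0 (1 + eta).
      left; exists 0%N; apply: le_trans' H0 _; apply: le_scalar hb (y_K _).
    right; exists 0%N, be0; split => //; [exact: ltW | by rewrite mul0r subr0].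
  - by left.
  - have D := dec_up _ _ _ _ eta0 H1 Hq H3.
    have [hb|hb] := leP (be - d) (1 + eta).
      left; exists (q + k)%N; apply: le_trans' D _; apply: le_scalar hb (y_K _).
    right; exists (q + k)%N, (be - d); split => //; first exact: ltW.
    by rewrite -natr1 mulrDl mul1r opprD addrA lerB.
have [m Hm] := exists_nat_gt (be0 / d).
have [//|[k [be [H1 H2 H3]]]] := claim m.
have : be0 < m%:R * d by rewrite -ltr_pdivrMr.
have : 0 < eta := eta0.
lra.
Qed.

Lemma eventually_lo (eta : R) : 0 < eta -> eta < 1 ->
  exists k, le ((1 - eta) *: y k) (y k.+1).
Proof.
move=> eta0 eta1; have [q Hq] := q_exists eta0.
set d := c ^+ q / (q.+1%:R * b).
have d0 : 0 < d := delta_pos q.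
pose al0 := a / b.
have al00 : 0 < al0 by rewrite divr_gt0.
have H0 : le (al0 *: y 0%N) (y 1%N).
  apply: le_trans' _ (y_bounds 1%N).1.
  have -> : a *: u = al0 *: (b *: u) by rewrite scalerA /al0 mulfVK // gt_eqF.
  apply: le_scale => //; exact: ltW.
have claim : forall m : nat, (exists k, le ((1 - eta) *: y k) (y k.+1)) \/
    exists k al, [/\ 0 < al, al <= 1 - eta, al0 + m%:R * d <= al & le (al *: y k) (y k.+1)].
  elim=> [|m [IH|[k [al [H0' H1 H2 H3]]]]].
  - have [hb|hb] := leP (1 - eta) al0.
      left; exists 0%N; apply: le_trans' _ H0; apply: le_scalar hb (y_K _).
    right; exists 0%N, al0; split => //; [exact: ltW | by rewrite mul0r addr0].
  - by left.
  - have D := dec_lo _ _ _ _ eta0 H0' H1 Hq H3.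
    have [hb|hb] := leP (1 - eta) (al + d).
      left; exists (q + k)%N; apply: le_trans' _ D; apply: le_scalar hb (y_K _).
    right; exists (q + k)%N, (al + d); split => //; first by rewrite addr_gt0.
      exact: ltW.
    by rewrite -natr1 mulrDl mul1r addrA lerD.
have [m Hm] := exists_nat_gt (1 / d).
have [//|[k [al [H1 H2 H3 H4]]]] := claim m.
have : 1 < m%:R * d by rewrite -ltr_pdivrMr.
lra.
Qed.
Lemma asym (eta : R) : 0 < eta -> eta < 1 -> exists k0, forall j, (k0 <= j)%N ->
  le ((1 - eta) *: y j) (y j.+1) /\ le (y j.+1) ((1 + eta) *: y j).
Proof.
move=> eta0 eta1.
have [k1 H1] := eventually_up _ eta0.
have [k2 H2] := eventually_lo _ eta0 eta1.
have P1 := prop_up _ _ (ltr_wpDr (ltW eta0) ltr01) H1.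
have eta1' : 0 < 1 - eta by rewrite subr_gt0.
have P2 := prop_lo _ _ eta1' H2.
exists (maxn k1 k2) => j Hj; split.
- have := P2 (j - k2)%N; rewrite subnK //; apply: leq_trans Hj; exact: leq_maxr.
- have := P1 (j - k1)%N; rewrite subnK //; apply: leq_trans Hj; exact: leq_maxl.
Qed.

Lemma conv_fixed : exists z, [/\ interior K z, T z = z & y @ \oo --> z].
Proof.
have [C C0 HC] := normal_K.
have ybd k : `|y k| <= C * `|b *: u|.
  by apply: HC; [exact: y_K | exact: (y_bounds k).2].
have [z Hz] := seq_cluster _ _ _ _ ybd.
have Kza : le (a *: u) z.
  apply: closed_approx => e e0; have [k _ hk] := Hz e e0 0%N.
  exists (y k - a *: u); split; first exact: (y_bounds k).1.
  by have -> : z - a *: u - (y k - a *: u) = z - y k by vec_id.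
have zint : interior K z.
  have -> : z = a *: u + (z - a *: u) by vec_id.
  exact: int_add (int_scale a0 uint) Kza.
have [r r0 Hr] := int_order _ zint.
have near_z (eps : R) N : 0 < eps -> exists2 k, (N <= k)%N &
    le ((1 - eps) *: z) (y k) /\ le (y k) ((1 + eps) *: z).
  move=> eps0; have [k Nk hk] := Hz (eps * r) (mulr_gt0 eps0 r0) N.
  exists k => //; split.
  - have -> : y k - (1 - eps) *: z = eps *: z + (y k - z) by vec_id.
    by apply: Hr => //; rewrite -normrN opprB ltW.
  - have -> : (1 + eps) *: z - y k = eps *: z + (z - y k) by vec_id.
    by apply: Hr => //; rewrite ltW.
have Tz : T z = z.
  have Kz := int_K zint.
  have key (d : R) : 0 < d -> le (T z) ((1 + d) *: z) /\ le ((1 - d) *: z) (T z).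
    move=> d0; pose eps := Num.min d 1 / 8.
    have e0 : 0 < eps by rewrite divr_gt0 // lt_min d0 ltr01.
    have ed : eps <= d / 8 by rewrite ler_pM2r // ge_min lexx.
    have e1 : eps <= 1 / 8 by rewrite ler_pM2r // ge_min lexx orbT.
    have eps1 : eps < 1 by lra.
    have [k0 Hk0] := asym _ e0 eps1.
    have [k k0k [lo hi]] := near_z eps k0 e0.
    have [A1 A2] := Hk0 k k0k.
    have e1p : 0 < 1 - eps by lra.
    have e1p' : 0 < 1 + eps by lra.
    have yi := y_int k.
    have zi1 := int_scale e1p zint.
    have zi2 := int_scale e1p' zint.
    split.
    + have M := T_mono _ _ zi1 yi lo.
      rewrite T_hom // in M.
      have M2 : le ((1 - eps) *: T z) ((1 + eps) *: ((1 + eps) *: z)).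
        apply: le_trans' M _; apply: le_trans' A2 _; exact: le_scale (ltW e1p') hi.
      have M3 := le_divl _ _ _ e1p M2.
      apply: le_trans' M3 _.
      have -> : (1 - eps)^-1 *: ((1 + eps) *: ((1 + eps) *: z)) =
        ((1 - eps)^-1 * ((1 + eps) * (1 + eps))) *: z by rewrite !scalerA.
      apply: le_scalar Kz.
      rewrite mulrC ler_pdivrMr //; nra.
    + have M := T_mono _ _ yi zi2 hi.
      rewrite T_hom // in M.
      have M2 : le ((1 - eps) *: ((1 - eps) *: z)) ((1 + eps) *: T z).
        apply: le_trans' _ M; apply: le_trans' _ A1; exact: le_scale (ltW e1p) lo.
      have M3 := le_divr _ _ _ e1p' M2.
      apply: le_trans' _ M3.
      have -> : (1 + eps)^-1 *: ((1 - eps) *: ((1 - eps) *: z)) =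
        ((1 + eps)^-1 * ((1 - eps) * (1 - eps))) *: z by rewrite !scalerA.
      apply: le_scalar Kz.
      rewrite mulrC ler_pdivlMr //; nra.
  have Q1 : K (z - T z).
    apply: (close_lim _ z) => d d0; have [H _] := key d d0.
    by have -> : z - T z + d *: z = (1 + d) *: z - T z by vec_id.
  have Q2 : K (- (z - T z)).
    apply: (close_lim _ z) => d d0; have [_ H] := key d d0.
    by have -> : - (z - T z) + d *: z = T z - (1 - d) *: z by vec_id.
  by have /eqP := Kpt Q1 Q2; rewrite subr_eq0 => /eqP.
exists z; split => //.
apply/cvgrPdist_le => e e0.
pose eps := Num.min (1 / 2) (e / ((2 * C + 1) * (`|z| + 1))).
have den : 0 < (2 * C + 1) * (`|z| + 1) by rewrite mulr_gt0 // ltr_wpDl // ?mulr_ge0 // ltW.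
have e0' : 0 < eps by rewrite lt_min divr_gt0 //=; rewrite divr_gt0.
have e1 : eps <= 1 / 2 by rewrite ge_min lexx.
have e2 : eps <= e / ((2 * C + 1) * (`|z| + 1)) by rewrite ge_min lexx orbT.
have [k0 _ [lo hi]] := near_z eps 0%N e0'.
have e1p : 0 < 1 - eps by lra.
have e1p' : 0 < 1 + eps by lra.
have inv j : le ((1 - eps) *: z) (y (j + k0)) /\ le (y (j + k0)) ((1 + eps) *: z).
  elim: j => [|j [l h]]; first by split.
  rewrite addSn; split.
  - have := T_mono _ _ (int_scale e1p zint) (y_int (j + k0)) l.
    by rewrite T_hom // Tz.
  - have := T_mono _ _ (y_int (j + k0)) (int_scale e1p' zint) h.
    by rewrite T_hom // Tz.
exists k0 => // j /= Hj; have [l h] := inv (j - k0)%N; rewrite subnK // in l h.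
have Kh : K (y j - (1 - eps) *: z) := l.
have Hh : le (y j - (1 - eps) *: z) ((2 * eps) *: z).
  by have -> : (2 * eps) *: z - (y j - (1 - eps) *: z) = (1 + eps) *: z - y j by vec_id.
have := HC _ _ Kh Hh.
have e2p : 0 <= 2 * eps by rewrite mulr_ge0 // ltW.
rewrite normrZ (ger0_norm e2p) => Hn.
have -> : z - y j = eps *: z - (y j - (1 - eps) *: z) by vec_id.
apply: le_trans (ler_normB _ _) _.
rewrite normrZ (ger0_norm (ltW e0')).
have zn : 0 <= `|z| by [].
have : eps * ((2 * C + 1) * (`|z| + 1)) <= e by rewrite -ler_pdivlMr.
move: Hn zn C0 e0'; set Z := `|z|; set H := `|_ - _|.
move=> Hn zn C0' e0'' He; nra.
Qed.
Lemma g_iter k : iter k (fun v => f v + v) x = (1 + lam) ^+ k *: y k.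
Proof.
elim: k => [|k IH]; first by rewrite expr0 scale1r.
have p : 0 < (1 + lam) ^+ k by rewrite exprn_gt0 // lam1.
rewrite iterS IH (fhom _ _ p (y_int k)) yS /T.
apply/rowP => i; rewrite !mxE exprS; field.
by rewrite gt_eqF // lam1.
Qed.

Lemma main_seq (N : 'rV[R]_n -> R) : is_norm N -> ~ interior K 0 ->
  exists v, [/\ interior K v, f v = lam *: v &
    (fun k : nat => (N (iter k (fun v => f v + v) x))^-1 *:
                        iter k (fun v => f v + v) x) @ \oo --> v].
Proof.
move=> HN nint0.
have [z [zint Tz cz]] := conv_fixed.
have [N0' _ HZ] := HN.
have Nz : N z != 0.
  apply/eqP => /N0' z0; apply: nint0; by rewrite -z0.
have Nzp : 0 < N z by rewrite lt_def Nz Nge0.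
have fz : f z = lam *: z.
  have : (1 + lam) *: T z = (1 + lam) *: z by rewrite Tz.
  rewrite /T scalerA mulfV ?gt_eqF ?lam1 // scale1r => E.
  have -> : f z = (f z + z) - z by rewrite addrK.
  rewrite E; vec_id.
exists ((N z)^-1 *: z); split.
- by apply: int_scale zint; rewrite invr_gt0.
- by rewrite fhom ?invr_gt0 // fz; vec_id.
have -> : (fun k : nat => (N (iter k (fun v => f v + v) x))^-1 *:
                        iter k (fun v => f v + v) x) = (fun k => (N (y k))^-1 *: y k).
  apply: funext => k; rewrite g_iter HZ.
  have p : 0 < (1 + lam) ^+ k by rewrite exprn_gt0 // lam1.
  by rewrite (ger0_norm (ltW p)) scalerA invfM mulrAC mulVf ?gt_eqF // mul1r.
have [C C0 HC] := N_lip _ _ _ HN.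
suff cN : (fun k => N (y k)) @ \oo --> N z.
  exact: (cvgZ (cvgV Nz cN) cz).
apply/cvgrPdist_le => e e0.
have e1 : 0 < e / (C + 1) by rewrite divr_gt0 // ltr_wpDl.
move/cvgrPdist_le: cz => /(_ _ e1).
apply: filterS => k Hk.
apply: le_trans (HC _ _) _.
apply: le_trans (ler_wpM2l C0 Hk) _.
rewrite mulrA ler_pdivrMr ?ltr_wpDl // mulrDr mulr1 mulrC lerDl.
exact: ltW.
Qed.
End Seq.
End Dyn.
End Cone.

Theorem theorem6p3 (R : realType) (n : nat) (N : 'rV[R]_n -> R)
  (K : set 'rV[R]_n) (f : 'rV[R]_n -> 'rV[R]_n) :
  is_norm N ->
  closed_cone K -> polyhedral K -> interior K !=set0 ->
  (forall x, interior K x -> interior K (f x)) ->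
  order_preserving_on K (interior K) f ->
  homogeneous_on (interior K) f ->
  (exists u, interior K u /\ eigenvector f u) ->
  forall x, interior K x ->
    exists v, interior K v /\ eigenvector f v /\
      (fun k : nat => (N (iter k (fun y => f y + y) x))^-1 *:
                        iter k (fun y => f y + y) x) @ \oo --> v.
Proof.
move=> HN [Kcl _ _ Kpt] [m [vv Kdef]] _ fint fmono fhom [u [uint [mu fu]]] x xint.
have KD : forall x y, K x -> K y -> K (x + y).
  move=> p q; rewrite Kdef => -[t [t0 ->]] [s [s0 ->]].
  exists (fun i => t i + s i); split; first by move=> i; exact: addr_ge0.
  by rewrite -big_split; apply: eq_bigr => i _; rewrite scalerDl.
have KZ : forall (t : R) x, 0 <= t -> K x -> K (t *: x).
  move=> c p c0; rewrite Kdef => -[t [t0 ->]].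
  exists (fun i => c * t i); split; first by move=> i; exact: mulr_ge0.
  by rewrite scaler_sumr; apply: eq_bigr => i _; rewrite scalerA.
have [int0|nint0] := pselect (interior K 0).
  have all0 : forall w : 'rV[R]_n, w = 0.
    have [r r0 Hr] := int_order _ _ _ KZ _ int0.
    have Kall : forall h, K h.
      move=> h; have e0 : 0 < `|h| / r + 1 by rewrite ltr_wpDl // divr_ge0 // ltW.
      have := Hr h _ e0; rewrite scaler0 add0r; apply.
      by rewrite mulrDl mul1r mulfVK ?gt_eqF // lerDl ltW.
    by move=> w; apply: Kpt; apply: Kall.
  exists x; split => //; split; first by exists 0; rewrite (all0 (f x)) scale0r.
  have -> : (fun k : nat => (N (iter k (fun y => f y + y) x))^-1 *:
                        iter k (fun y => f y + y) x) = (fun _ => x).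
    by apply: funext => k; rewrite (all0 x) (all0 (_ *: _)).
  exact: cvg_cst.
have mu0 : 0 < mu.
  rewrite ltNge; apply/negP => mu0; apply: nint0.
  have Kfu : K (f u) := int_K _ _ _ (fint u uint).
  have Kmfu : K (- f u) by rewrite fu -scaleNr; apply: KZ (int_K _ _ _ uint); rewrite oppr_ge0.
  by rewrite -(Kpt _ Kfu Kmfu); apply: fint.
have [a a0 xa] := int_lower _ _ _ x u xint.
have [b b0 xb] := int_upper _ _ _ KZ x u uint.
have [v [vint fv cv]] := main_seq _ _ _ Kcl KD KZ Kpt _ _ _ fint fmono fhom uint fu mu0 _ xint _ _ a0 b0 xa xb _ HN nint0.
by exists v; split => //; split => //; exists mu.
Qed.
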